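(* Let $A=[a_{ij}]$ be a real $n\times n$ matrix with zero diagonal and $f(\sigma)=\sum_{p=1}^{n-1}\sum_{q=p+1}^n a_{\sigma(p)\sigma(q)}$ its LOP objective function on $\Sigma_n$. Let $k\ge0$, $l\ge1$ with $k+l\le n$, let $i_1,\dots,i_k,j_1,\dots,j_l\in\{1,\dots,n\}$ be pairwise distinct, and let $S_1=\{\sigma:\sigma(1)=i_1,\dots,\sigma(k)=i_k\}$, $S_2=\{\sigma:\sigma(n)=j_1,\sigma(n-1)=j_2,\dots,\sigma(n-l+1)=j_l\}$. Writing $I=\{i_1,\dots,i_k\}$, $J=\{j_1,\dots,j_l\}$ and $[n]=\{1,\dots,n\}$, $$\frac{1}{|S_1\cap S_2|}\sum_{\sigma\in S_1\cap S_2}f(\sigma)=\sum_{r=1}^{k}\ \sum_{j\in[n]\setminus\{i_1,\dots,i_r\}}a_{i_rj}+\sum_{s=1}^{l}\ \sum_{i\in[n]\setminus(I\cup\{j_1,\dots,j_{s-1}\})}a_{ij_s}+\frac12\sum_{i,j\in[n]\setminus(I\cup J)}a_{ij}.$$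
   Context: $\Sigma_n$ is the symmetric group on $\{1,\dots,n\}$; $\sigma(p)$ is the row/column index placed in position $p$. *)

(* Defs.v *)
From mathcomp Require Import all_boot all_order all_algebra all_fingroup.
Set Implicit Arguments. Unset Strict Implicit. Unset Printing Implicit Defensive.
Import GRing.Theory Num.Theory.
Local Open Scope ring_scope.

(* Positions and indices are 0-based: {1..n} is rendered as 'I_n.
   sigma p is the row/column index placed in position p. *)

Definition lop_obj (R : ringType) (n : nat) (A : 'M[R]_n) (s : 'S_n) : R :=
  \sum_(p < n) \sum_(q < n | (p < q)%N) A (s p) (s q).

Definition fix_head (n k : nat) (i : 'I_k -> 'I_n) : {set 'S_n} :=
  [set s : 'S_n | [forall p : 'I_n, forall r : 'I_k,
                    (val p == val r) ==> (s p == i r)]].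

(* S_2 : sigma(n - s) = j_{s+1} (1-based), i.e. position p with p + s + 1 = n
   (0-based) holds j s, for s < l *)
Definition fix_tail (n l : nat) (j : 'I_l -> 'I_n) : {set 'S_n} :=
  [set s : 'S_n | [forall p : 'I_n, forall t : 'I_l,
                    (val p + t.+1 == n)%N ==> (s p == j t)]].

(* Main.v *)
Require Import Defs.
From mathcomp Require Import all_boot all_order all_algebra all_fingroup.
From mathcomp Require Import zify ring.
Import GRing.Theory Num.Theory.
Local Open Scope ring_scope.

Section Prop7.
Variables (R : realFieldType) (n k l : nat) (A : 'M[R]_n)
  (i : 'I_k -> 'I_n) (j : 'I_l -> 'I_n).
Hypotheses (A0 : forall x : 'I_n, A x x = 0) (lpos : (0 < l)%N)
  (kln : (k + l <= n)%N) (ii : injective i) (jj : injective j)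
  (ij : forall r t, i r != j t).

Local Notation I := [set i r | r : 'I_k].
Local Notation J := [set j t | t : 'I_l].
Local Notation M := (~: (I :|: J)).
Local Notation S := (fix_head i :&: fix_tail j).

Lemma kn : (k <= n)%N. Proof. lia. Qed.
Definition hd (r : 'I_k) : 'I_n := widen_ord kn r.
Lemma tl_lt (t : 'I_l) : (n - t.+1 < n)%N.
Proof. have := ltn_ord t; lia. Qed.
Definition tl (t : 'I_l) : 'I_n := Ordinal (tl_lt t).

Definition goodS (s : 'S_n) :=
  (forall r, s (hd r) = i r) /\ (forall t, s (tl t) = j t).

Lemma inSP s : s \in S <-> goodS s.
Proof.
rewrite inE !inE; split.
  case/andP => /forallP H /forallP T; split => [r|t].
    by move/forallP: (H (hd r)) => /(_ r) /implyP /(_ (eqxx _)) /eqP.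
  move/forallP: (T (tl t)) => /(_ t) /implyP H1; apply/eqP/H1 => /=.
  by apply/eqP; have := ltn_ord t; lia.
case=> H T; apply/andP; split; apply/forallP => p; apply/forallP => r;
  apply/implyP => /eqP e.
  have -> : p = hd r by apply: val_inj.
  by rewrite H.
have -> : p = tl r by apply: val_inj => /=; by rewrite -[in RHS]e addnK.
by rewrite T.
Qed.

Section Good.
Variable s : 'S_n.
Hypothesis gs : goodS s.

Lemma invhd r : (s^-1)%g (i r) = hd r.
Proof. by case: gs => H _; rewrite -H permK. Qed.
Lemma invtl t : (s^-1)%g (j t) = tl t.
Proof. by case: gs => _ H; rewrite -H permK. Qed.

Lemma notI x : x \notin I -> (k <= (s^-1)%g x)%N.
Proof.
apply: contraR; rewrite -ltnNge => h.
have e : (s^-1)%g x = hd (Ordinal h) by apply: val_inj.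
by rewrite -[x](permKV s) e (proj1 gs) imset_f.
Qed.

Lemma notJ x : x \notin J -> ((s^-1)%g x < n - l)%N.
Proof.
apply: contraR; rewrite -leqNgt => h.
have h2 : (n - ((s^-1)%g x).+1 < l)%N by have := ltn_ord ((s^-1)%g x); lia.
have e : (s^-1)%g x = tl (Ordinal h2).
  by apply: val_inj => /=; have := ltn_ord ((s^-1)%g x); lia.
by rewrite -[x](permKV s) e (proj2 gs) imset_f.
Qed.
End Good.

Lemma lop_inv s : lop_obj A s =
  \sum_(x : 'I_n) \sum_(y : 'I_n | ((s^-1)%g x < (s^-1)%g y)%N) A x y.
Proof.
rewrite /lop_obj (reindex_perm (s^-1)%g); apply: eq_bigr => x _.
rewrite (reindex_perm (s^-1)%g); apply: eq_big => y //= _.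
by rewrite !permKV.
Qed.

Definition g (s : 'S_n) := \sum_(x : 'I_n) \sum_(y : 'I_n)
  (if [&& x \in M, y \in M & ((s^-1)%g x < (s^-1)%g y)%N] then A x y else 0).

Definition T1 := \sum_(r < k) \sum_(x : 'I_n | x \notin [set i r' | r' : 'I_k & (r' <= r)%N])
        A (i r) x.
Definition T2 := \sum_(t < l) \sum_(x : 'I_n | (x \notin I) && (x \notin [set j t' | t' : 'I_l & (t' < t)%N]))
        A x (j t).

Lemma f_decomp s : goodS s -> lop_obj A s = T1 + T2 + g s.
Proof.
move=> gs; rewrite lop_inv (bigID (fun x => x \in I)) /= big_imset /=; last first.
  by move=> ? ? _ _; apply: ii.
rewrite -addrA; congr (_ + _).
  apply: eq_big => // r _; apply: eq_bigl => y.
  rewrite invhd //.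
  case yI: (y \in I).
    case/imsetP: yI => r' _ ->; rewrite invhd // mem_imset // inE /= ltnNge //.
  have := @notI s gs y (negbT yI); rewrite /= => h.
  have -> : (r < (s^-1)%g y)%N by have := ltn_ord r; lia.
  apply/esym/negP => /imsetP [r' _ e]; move/negP: yI; apply; rewrite e imset_f //.
rewrite (eq_bigr (fun x => \sum_(y | ((s^-1)%g x < (s^-1)%g y)%N && (y \in J)) A x y
   + \sum_(y | ((s^-1)%g x < (s^-1)%g y)%N && (y \notin J)) A x y)); last first.
  by move=> x _; rewrite (bigID (fun y => y \in J)).
rewrite big_split /=; congr (_ + _).
  rewrite (eq_bigr (fun x => \sum_(t < l) (if ((s^-1)%g x < (s^-1)%g (j t))%N then A x (j t) else 0))); last first.
    move=> x _; rewrite (eq_bigl (fun y => (y \in J) && ((s^-1)%g x < (s^-1)%g y)%N)); last first.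
      by move=> y; rewrite andbC.
    rewrite big_mkcondr big_imset //=; by move=> ? ? _ _; apply: jj.
  rewrite exchange_big /=; apply: eq_bigr => t _.
  rewrite big_mkcond [RHS]big_mkcond; apply: eq_bigr => x _.
  case xI: (x \in I) => //=.
  case: (eqVneq x (j t)) => [->|xt]; first by rewrite A0; case: ifP; case: ifP.
  rewrite invtl //.
  case xJ: (x \in J).
    case/imsetP: xJ => t' _ e.
    have tt : (t' : nat) != t.
      by apply: contraNneq xt => h; rewrite e; have -> : t' = t by apply: val_inj.
    rewrite e invtl // mem_imset // inE /=.
    have -> : (n - t'.+1 < n - t.+1)%N = ~~ (t' < t)%N.
      by move: tt; have := ltn_ord t; have := ltn_ord t'; lia.
    by [].
  have h := @notJ s gs x (negbT xJ).
  have -> : ((s^-1)%g x < n - t.+1)%N by have := ltn_ord t; lia.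
  case: ifP => // /imsetP [t' _ e]; move/negP: xJ; case; rewrite e imset_f //.
rewrite /g big_mkcond; apply: eq_bigr => x _.
case xI: (x \in I) => /=.
  by rewrite big1 // => y _; rewrite !inE xI.
rewrite big_mkcond; apply: eq_bigr => y _.
congr (if _ then _ else _).
rewrite !inE xI /=.
case: (boolP (y \in J)) => yJ; first by rewrite /= orbT /= !andbF.
case: (boolP ((s^-1)%g x < (s^-1)%g y)%N) => c; last by rewrite !andbF.
have h1 := @notI s gs x (negbT xI).
have xJ : x \notin J.
  apply/negP => /imsetP [t _ e]; move: c; rewrite e invtl //=.
  have := @notJ s gs y yJ; have := ltn_ord t; lia.
have yI : y \notin I.
  apply/negP => /imsetP [r _ e]; move: c; rewrite e invhd //=.
  have := ltn_ord r; lia.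
by rewrite xJ orbF yI.
Qed.

Definition rfn (p : nat) : nat :=
  if (k <= p)%N && (p < n - l)%N then ((k + (n - l)).-1 - p)%N else p.
Lemma rfn_lt (p : 'I_n) : (rfn p < n)%N.
Proof. rewrite /rfn; have := ltn_ord p; case: ifP => ?; lia. Qed.
Definition rf (p : 'I_n) : 'I_n := Ordinal (rfn_lt p).
Lemma rfK : cancel rf rf.
Proof.
move=> p; apply: val_inj => /=; rewrite /rfn.
have := ltn_ord p; case: (boolP ((k <= p)%N && (p < n - l)%N)) => h1 /=; case: ifP => h2; lia.
Qed.
Definition rho : 'S_n := perm (can_inj rfK).
Lemma rhoE p : rho p = rf p. Proof. by rewrite permE. Qed.
Lemma rhoV p : (rho^-1)%g p = rho p.
Proof. by apply: (@perm_inj _ rho); rewrite permKV !rhoE rfK. Qed.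

Lemma rho_good s : goodS s -> goodS (rho * s)%g.
Proof.
case=> H T; split => [r|t]; rewrite permM rhoE.
  have -> : rf (hd r) = hd r.
    by apply: val_inj => /=; rewrite /rfn /=; case: ifP => // ?; have := ltn_ord r; lia.
  exact: H.
have -> : rf (tl t) = tl t.
  by apply: val_inj => /=; rewrite /rfn /=; case: ifP => // ?; have := ltn_ord t; lia.
exact: T.
Qed.

Lemma rhorho : (rho * rho)%g = 1%g.
Proof. by apply/permP => p; rewrite permM perm1 !rhoE rfK. Qed.

Lemma rho_inS s : ((rho * s)%g \in S) = (s \in S).
Proof.
apply/idP/idP => /inSP h; apply/inSP.
  by have := @rho_good _ h; rewrite mulgA rhorho mul1g.
exact: (@rho_good s h).
Qed.

Definition TM := \sum_(x : 'I_n) \sum_(y : 'I_n) (if (x \in M) && (y \in M) then A x y else 0).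

Lemma g_rho s : goodS s -> g s + g (rho * s)%g = TM.
Proof.
move=> gs; rewrite /g -big_split; apply: eq_bigr => x _.
rewrite -big_split; apply: eq_bigr => y _ /=.
rewrite invMg permM rhoV permM rhoV !rhoE /=.
case: (boolP ((x \in M) && (y \in M))) => /= [/andP [xM yM]|]; last first.
  by case: (x \in M); case: (y \in M) => //= _; rewrite addr0.
rewrite xM yM /=.
have hx1 := @notI s gs x; have hx2 := @notJ s gs x.
have hy1 := @notI s gs y; have hy2 := @notJ s gs y.
move: xM yM; rewrite !inE !negb_or => /andP [xI xJ] /andP [yI yJ].
move: (hx1 xI) (hx2 xJ) (hy1 yI) (hy2 yJ); rewrite /rfn.
set a := ((s^-1)%g x : nat); set b := ((s^-1)%g y : nat) => h1 h2 h3 h4.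
rewrite h1 h2 h3 h4 /=.
have -> : ((k + (n - l)).-1 - a < (k + (n - l)).-1 - b)%N = (b < a)%N by lia.
case: (ltngtP a b) => h; rewrite ?addr0 ?add0r //.
have : (s^-1)%g x = (s^-1)%g y by apply: val_inj.
by move/perm_inj => ->; rewrite A0.
Qed.

Lemma cardI : #|I| = k. Proof. by rewrite card_imset // card_ord. Qed.
Lemma cardJ : #|J| = l. Proof. by rewrite card_imset // card_ord. Qed.
Lemma IJ0 : I :&: J = set0.
Proof.
apply/setP => x; rewrite !inE; apply/negP => /andP [/imsetP [r _ ->] /imsetP [t _ e]].
by move: (ij r t); rewrite e eqxx.
Qed.
Lemma cardM : #|M| = (n - (k + l))%N.
Proof.
have := cardsC (I :|: J); rewrite card_ord.
have := cardsUI I J; rewrite IJ0 cards0 cardI cardJ; lia.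
Qed.

Lemma exS : exists s, goodS s.
Proof.
pose x0 := j (Ordinal lpos).
pose sq := [seq i r | r <- enum 'I_k] ++ enum M ++ rev [seq j t | t <- enum 'I_l].
have szs : size sq = n.
  by rewrite !size_cat size_rev !size_map -!enumT !size_enum_ord -cardE cardM; lia.
have uq : uniq sq.
  apply: (@leq_size_uniq _ (enum 'I_n)); [exact: enum_uniq | | by rewrite szs size_enum_ord].
  move=> x _; rewrite !mem_cat mem_rev.
  case: (boolP (x \in I)) => [/imsetP [r _ ->]|xI]; first by rewrite map_f // mem_enum.
  case: (boolP (x \in J)) => [/imsetP [t _ ->]|xJ]; first by rewrite (map_f j) ?mem_enum ?orbT.
  by rewrite mem_enum !inE negb_or xI xJ orbT.
have f_lt (p : 'I_n) : (p < size sq)%N by rewrite szs.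
pose f (p : 'I_n) := nth x0 sq p.
have finj : injective f.
  by move=> p q; rewrite /f => /eqP; rewrite nth_uniq // => /eqP; apply: val_inj.
exists (perm finj); split => [r|t]; rewrite permE /f /=.
  by rewrite nth_cat size_map size_enum_ord ltn_ord (nth_map r) ?size_enum_ord // nth_ord_enum.
rewrite nth_cat size_map size_enum_ord.
have lt := ltn_ord t.
rewrite ifN; last by rewrite -leqNgt; lia.
rewrite nth_cat -cardE cardM ifN; last by rewrite -leqNgt; lia.
rewrite nth_rev size_map size_enum_ord; last by lia.
rewrite (nth_map t) ?size_enum_ord; last by lia.
have -> : (l - (n - t.+1 - k - (n - (k + l))).+1)%N = t by lia.
by rewrite nth_ord_enum.
Qed.

Lemma main : (#|S|%:R)^-1 * \sum_(s in S) lop_obj A s = T1 + T2 +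
   2%:R^-1 * \sum_(x : 'I_n | x \notin I :|: J) \sum_(y : 'I_n | y \notin I :|: J) A x y.
Proof.
have e1 : \sum_(s in S) lop_obj A s = \sum_(s in S) (T1 + T2 + g s).
  by apply: eq_bigr => s /inSP; apply: f_decomp.
rewrite e1 big_split /= sumr_const.
have e3 : \sum_(s in S) g s = \sum_(s in S) g (rho * s)%g.
  rewrite (reindex_inj (mulgI rho)); apply: eq_bigl => s; by rewrite rho_inS.
have e2 : 2%:R * \sum_(s in S) g s = TM *+ #|S|.
  rewrite mulr_natl mulr2n {2}e3 -big_split /= -sumr_const.
  by apply: eq_bigr => s /inSP gs; apply: g_rho.
have eTM : TM = \sum_(x : 'I_n | x \notin I :|: J) \sum_(y : 'I_n | y \notin I :|: J) A x y.
  rewrite /TM [RHS]big_mkcond; apply: eq_bigr => x _; rewrite in_setC.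
  case: (x \notin I :|: J) => /=; first by rewrite [RHS]big_mkcond; apply: eq_bigr => y _; rewrite in_setC.
  by rewrite big1.
have [s0 gs0] := exS.
have hS : (0 < #|S|)%N by apply/card_gt0P; exists s0; apply/inSP.
have hN : (#|S|%:R : R) != 0 by rewrite pnatr_eq0 -lt0n.
have h2 : (2%:R : R) != 0 by rewrite pnatr_eq0.
have eG : \sum_(s in S) g s = 2%:R^-1 * (TM * #|S|%:R).
  by rewrite mulr_natr -e2 mulKf.
rewrite eG -eTM -mulr_natr.
by field.
Qed.
End Prop7.

Theorem proposition7 (R : realFieldType) (n k l : nat) (A : 'M[R]_n)
    (i : 'I_k -> 'I_n) (j : 'I_l -> 'I_n) :
  (forall x : 'I_n, A x x = 0) ->
  (0 < l)%N -> (k + l <= n)%N ->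
  injective i -> injective j -> (forall r t, i r != j t) ->
  let S := fix_head i :&: fix_tail j in
  let I := [set i r | r : 'I_k] in
  let J := [set j t | t : 'I_l] in
  (#|S|%:R)^-1 * \sum_(s in S) lop_obj A s =
    \sum_(r < k) \sum_(x : 'I_n | x \notin [set i r' | r' : 'I_k & (r' <= r)%N])
        A (i r) x
  + \sum_(t < l) \sum_(x : 'I_n | (x \notin I) && (x \notin [set j t' | t' : 'I_l & (t' < t)%N]))
        A x (j t)
  + 2%:R^-1 * \sum_(x : 'I_n | x \notin I :|: J) \sum_(y : 'I_n | y \notin I :|: J) A x y.
Proof.
move=> A0 lpos kln ii jj ij S I J.
exact: (@main R n k l A i j A0 lpos kln ii jj ij).
Qed.
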